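(* Let $F\subsetneq K$ be fields of characteristic $0$, with $F$ a proper nonempty subfield of $K$. Let $p(x)=\sum_{k=0}^{n}a_k x^k\in K[x]$ be non-constant with $a_n\neq 0$, and let $q(x)=\sum_{j=0}^{m}b_j x^j\in K[x]\setminus F[x]$ with $b_m\neq 0$ and $b_m\in F$. If $b_j\notin F$ for some $j\geq 1$, then $p\circ q\notin F[x]$.
   Context: $F[x]$ denotes the set of polynomials with all coefficients in $F$. *)

(* Defs.v *)
From HB Require Import structures.
From mathcomp Require Import all_boot all_order all_algebra.
Set Implicit Arguments. Unset Strict Implicit. Unset Printing Implicit Defensive.
Import Order.TTheory GRing.Theory Num.Theory.

(* Main.v *)
Require Import Defs.
From HB Require Import structures.
From mathcomp Require Import all_boot all_order all_algebra.
From mathcomp Require Import zify.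
Import GRing.Theory.
Local Open Scope ring_scope.

Lemma coef_nz_size (R : nzSemiRingType) (p : {poly R}) i :
  p`_i != 0 -> (i < size p)%N.
Proof. by move=> H; rewrite ltnNge; apply: contra H => /(nth_default 0) ->. Qed.

Lemma size_exact (R : nzSemiRingType) (p : {poly R}) i :
  p`_i != 0 -> (size p <= i.+1)%N -> size p = i.+1.
Proof. by move=> /coef_nz_size H1 H2; apply/eqP; rewrite eqn_leq H1 H2. Qed.

Theorem proposition11 (K : fieldType) (F : divringClosed K)
  (charK0 : [pchar K] =i pred0)
  (F_proper : exists x : K, x \notin F)
  (p q : {poly K})
  (p_nonconst : (1 < size p)%N)
  (q_notF : q \notin polyOver F)
  (q_nz : q != 0)
  (lc_q_F : lead_coef q \in F)
  (hj : exists j : nat, (0 < j)%N /\ q`_j \notin F) :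
  (p \Po q) \notin polyOver F.
Proof.
apply/negP => HP.
have F0 : (0 : K) \in F := rpred0 F.
have nzF : forall x, x \notin F -> x != 0.
  by move=> x; apply: contra => /eqP ->.
case: hj => j [j0 qjF].
have jlt : (j < size q)%N by apply: coef_nz_size; exact: nzF.
pose P := fun i => (i < size q)%N && (q`_i \notin F).
have exP : exists i, P i by exists j; rewrite /P jlt qjF.
have ubP : forall i, P i -> (i <= size q)%N by move=> i /andP[/ltnW].
case: (ex_maxnP exP ubP) => k /andP[klt qkF] kmax.
have jk : (j <= k)%N by apply: kmax; rewrite /P jlt qjF.
set m := (size q).-1.
have km : (k < m)%N.
  have : k != m.
    apply/eqP => Ekm; move: qkF; rewrite Ekm -lead_coefE.
    by rewrite lc_q_F.
  move=> H; clear -klt H; rewrite /m; lia.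
have qiF : forall i, (k < i)%N -> q`_i \in F.
  move=> i ki; case: (ltnP i (size q)) => iq.
    apply/negPn/negP => H.
    have := kmax i; rewrite /P iq H => /(_ isT) Hik; clear -Hik ki; lia.
  by rewrite nth_default.
set e := take_poly k.+1 q.
set h := q - e.
have ecoef : forall i, e`_i = if (i < k.+1)%N then q`_i else 0.
  by move=> i; rewrite /e coef_take_poly.
have hcoef : forall i, h`_i = if (i < k.+1)%N then 0 else q`_i.
  by move=> i; rewrite /h coefB ecoef; case: ifP => _; rewrite ?subrr ?subr0.
have hF : h \is a polyOver F.
  apply/polyOverP => i; rewrite hcoef; case: ifP => // /negbT; rewrite -leqNgt.
  by move=> ki; apply: qiF.
have esize : size e = k.+1.
  apply: size_exact; first by rewrite ecoef ltnSn; exact: nzF.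
  exact: size_take_poly.
have elead : lead_coef e = q`_k by rewrite lead_coefE esize ecoef ltnSn.
set b := lead_coef q.
have b0 : b != 0 by rewrite lead_coef_eq0.
have qsize : size q = m.+1 by rewrite /m prednK // size_poly_gt0.
have hsize : size h = m.+1.
  apply: size_exact.
    rewrite hcoef ifF; last by apply/negbTE; rewrite -leqNgt.
    by have -> : q`_m = b by rewrite /b lead_coefE qsize.
  apply/leq_sizeP => i mi; rewrite hcoef; case: ifP => // _.
  by rewrite nth_default // qsize.
have hlead : lead_coef h = b.
  rewrite lead_coefE hsize /= hcoef ifF; last by apply/negbTE; rewrite -leqNgt.
  by rewrite /b lead_coefE qsize.
have h0 : h != 0 by rewrite -size_poly_gt0 hsize.
set n := (size p).-1.
set a := lead_coef p.
have a0 : a != 0 by rewrite lead_coef_eq0 -size_poly_gt0; exact: ltnW.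
have n0 : (0 < n)%N by rewrite /n -subn1 subn_gt0.
have m1 : (1 < size q)%N by rewrite qsize ltnS; exact: leq_ltn_trans (leq0n k) km.
have aF : a \in F.
  have : lead_coef (p \Po q) \in F by rewrite lead_coefE; exact: (polyOverP HP).
  rewrite lead_coef_comp // -/a -/b -/n => H.
  have -> : a = a * b ^+ n / b ^+ n by rewrite mulfK // expf_neq0.
  by rewrite rpredM // rpredV rpredX.
set S := \sum_(i < n) q ^+ (n.-1 - i) * h ^+ i.
have HS : q ^+ n - h ^+ n = e * S.
  by rewrite subrXX /h opprB addrC subrK.
set N0 := (m * n.-1)%N.
have Tsize : forall i, (i < n)%N -> size (q ^+ (n.-1 - i) * h ^+ i) = N0.+1.
  move=> i ilt.
  rewrite size_mul ?expf_neq0 //.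
  have s1 := size_exp q (n.-1 - i); have s2 := size_exp h i.
  rewrite qsize /= in s1; rewrite hsize /= in s2.
  have p1 : (0 < size (q ^+ (n.-1 - i)))%N by rewrite size_poly_gt0 expf_neq0.
  have p2 : (0 < size (h ^+ i))%N by rewrite size_poly_gt0 expf_neq0.
  rewrite /N0.
  have -> : (m * n.-1 = m * (n.-1 - i) + m * i)%N.
    by rewrite -mulnDr subnK // -ltnS prednK.
  by rewrite -(prednK p1) -(prednK p2) s1 s2 addSn addnS.
have Tlead : forall i, (i < n)%N -> lead_coef (q ^+ (n.-1 - i) * h ^+ i) = b ^+ n.-1.
  move=> i ilt; rewrite lead_coefM !lead_coef_exp hlead -exprD subnK // -ltnS prednK //.
have Scoef : S`_N0 = b ^+ n.-1 *+ n.
  rewrite /S coef_sum.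
  rewrite (eq_bigr (fun _ => b ^+ n.-1)); first by rewrite sumr_const card_ord.
  move=> i _; rewrite -(Tlead i (ltn_ord i)) lead_coefE Tsize //.
have nR0 : (n%:R : K) != 0.
  by have := (pcharf0P K).1 charK0 n; rewrite /= => ->; rewrite -lt0n.
have Scoef0 : S`_N0 != 0.
  by rewrite Scoef -mulr_natr mulf_neq0 // expf_neq0.
have Ssize : size S = N0.+1.
  apply: size_exact => //.
  apply/leq_sizeP => j1 Nj; rewrite /S coef_sum big1 // => i _.
  by rewrite nth_default // Tsize.
have Slead : lead_coef S = b ^+ n.-1 *+ n by rewrite lead_coefE Ssize.
have S0 : S != 0 by rewrite -size_poly_gt0 Ssize.
have e0 : e != 0 by rewrite -size_poly_gt0 esize.
set T := e * S.
have Tsz : size T = (N0 + k).+1 by rewrite /T size_mul // esize Ssize addSn addnS /= addnC.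
have TL : lead_coef T = q`_k * (b ^+ n.-1 *+ n) by rewrite /T lead_coefM elead Slead.
set p0 := p - a *: 'X^n.
have p0size : (size p0 <= n)%N.
  apply/leq_sizeP => i ni; rewrite /p0 coefB coefZ coefXn.
  case: (ltnP n i) => ni'.
    rewrite gtn_eqF // mulr0 subr0 nth_default //.
    by move: ni'; rewrite /n; case: (size p).
  have -> : i = n by apply/eqP; rewrite eqn_leq ni ni'.
  by rewrite eqxx mulr1 /a lead_coefE subrr.
have pE : p = p0 + a *: 'X^n by rewrite /p0 subrK.
set r := p \Po q - a *: h ^+ n.
have rE : r = p0 \Po q + a *: T.
  rewrite /r {1}pE comp_polyD comp_polyZ comp_Xn_poly /T -HS scalerBr.
  by rewrite addrA.
have rF : r \is a polyOver F by rewrite /r rpredB // polyOverZ // rpredX.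
have szp0q : (size (p0 \Po q) < size (a *: T))%N.
  rewrite size_scale // Tsz.
  apply: leq_ltn_trans (size_comp_poly_leq _ _) _.
  rewrite -/m ltnS /N0.
  have H : ((size p0).-1 <= n.-1)%N by rewrite -!subn1 leq_sub2r.
  rewrite mulnC; apply: leq_ltn_trans (leq_mul (leqnn m) H) _.
  by rewrite -[X in (X < _)%N]addn0 ltn_add2l (leq_trans j0 jk).
have rL : lead_coef r = a * (q`_k * (b ^+ n.-1 *+ n)).
  by rewrite rE lead_coefDr // lead_coefZ TL.
have rLF : lead_coef r \in F by rewrite lead_coefE; exact: (polyOverP rF).
move: qkF; apply/negP; rewrite negbK.
have d0 : a * (b ^+ n.-1 *+ n) != 0 by rewrite mulf_neq0 // -mulr_natr mulf_neq0 // expf_neq0.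
have -> : q`_k = lead_coef r / (a * (b ^+ n.-1 *+ n)).
  by rewrite rL mulrCA mulfK.
rewrite rpredM // rpredV rpredM // -mulr_natr rpredM // ?rpredX //.
exact: rpred_nat.
Qed.
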